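(* Let $S\subseteq\mathbb{N}[x]^n$. Then the set of minimal elements of $S$ with respect to the partial order $\preceq$ is finite.
   Context: For $f=\sum_{i}f_ix^i,g=\sum_ig_ix^i\in\mathbb{N}[x]$, with coefficients padded by zeros up to a common index $K$ exceeding both degrees, $f\preceq g$ iff $\sum_{j=i}^Kf_j\le\sum_{j=i}^Kg_j$ for all $i=0,\ldots,K$. For $\mathbf{u}=(u_1,\ldots,u_n),\mathbf{v}=(v_1,\ldots,v_n)\in\mathbb{N}[x]^n$, $\mathbf{u}\preceq\mathbf{v}$ iff $u_i\preceq v_i$ for all $i$. *)

(* Defs.v *)
From HB Require Import structures.
From mathcomp Require Import all_boot all_order all_algebra.
Set Implicit Arguments. Unset Strict Implicit. Unset Printing Implicit Defensive.
Import GRing.Theory.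

(* Polynomials in N[x] are elements of {poly nat}; p`_j is the j-th coefficient
   (zero beyond the degree).  K := maxn (size f) (size g) exceeds both degrees
   (size = degree + 1); the comparison does not depend on the choice of such K. *)
Definition tail_sum (f : {poly nat}) (K i : nat) : nat :=
  (\sum_(i <= j < K.+1) (f`_j)%R)%N.

Definition poly_le (f g : {poly nat}) : Prop :=
  let K := maxn (size f) (size g) in
  forall i, (i <= K)%N -> (tail_sum f K i <= tail_sum g K i)%N.

Definition vec_le (n : nat) (u v : {ffun 'I_n -> {poly nat}}) : Prop :=
  forall i : 'I_n, poly_le (u i) (v i).

Definition is_minimal (n : nat) (S : {ffun 'I_n -> {poly nat}} -> Prop)
  (u : {ffun 'I_n -> {poly nat}}) : Prop :=
  S u /\ forall v, S v -> vec_le v u -> v = u.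

(* Main.v *)
Require Import Defs.
From mathcomp Require Import all_boot all_order all_algebra.
From mathcomp Require Import zify.
From Stdlib Require Import Classical ClassicalEpsilon.

Set Implicit Arguments. Unset Strict Implicit.

Definition wqo {T} (D : T -> Prop) (R : T -> T -> Prop) :=
  forall f : nat -> T, (forall k, D (f k)) -> exists i j, (i < j)%N /\ R (f i) (f j).
Definition swqo {T} (D : T -> Prop) (R : T -> T -> Prop) :=
  forall f : nat -> T, (forall k, D (f k)) -> exists phi : nat -> nat,
    (forall i, phi i < phi i.+1)%N /\ (forall i j, (i < j)%N -> R (f (phi i)) (f (phi j))).

Lemma choice_fun {A B} (P : A -> B -> Prop) :
  (forall a, exists b, P a b) -> exists f, forall a, P a (f a).
Proof.
move=> H; exists (fun a => proj1_sig (constructive_indefinite_description _ (H a))).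
move=> a; exact: proj2_sig _.
Qed.

Lemma incr_mono (phi : nat -> nat) : (forall i, phi i < phi i.+1)%N ->
  forall i j, (i < j)%N -> (phi i < phi j)%N.
Proof.
move=> H i j; elim: j => // j IH; rewrite ltnS leq_eqVlt => /orP [/eqP-> | h].
  exact: H.
exact: ltn_trans (IH h) (H j).
Qed.

Lemma weak_strong T (D : T -> Prop) (R : T -> T -> Prop) :
  (forall x y z, R x y -> R y z -> R x z) -> wqo D R -> swqo D R.
Proof.
move=> Rt W f Df.
have [N HN] : exists N, forall i, (N <= i)%N -> exists j, (i < j)%N /\ R (f i) (f j).
  apply: NNPP => Hno.
  have Hterm : forall N, exists i, (N <= i)%N /\ forall j, (i < j)%N -> ~ R (f i) (f j).
    move=> N; apply: NNPP => H1; apply: Hno; exists N => i Ni; apply: NNPP => H2.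
    apply: H1; exists i; split => // j ij Rij; apply: H2; by exists j.
  have [t Ht] := choice_fun Hterm.
  pose idx := fix idx k := if k is k'.+1 then t (idx k').+1 else t 0.
  have idx_incr : forall k, (idx k < idx k.+1)%N.
    by move=> k /=; have [h _] := Ht (idx k).+1.
  have term : forall k j, (idx k < j)%N -> ~ R (f (idx k)) (f j).
    by case=> [|k] /=; [apply: (Ht 0).2 | apply: (Ht _).2].
  have [i [j [ij Rij]]] := W (fun k => f (idx k)) (fun k => Df _).
  exact: term i (idx j) (incr_mono idx_incr ij) Rij.
have Hc0 : forall i, exists j, (N <= i)%N -> (i < j)%N /\ R (f i) (f j).
  move=> i; case: (leqP N i) => h.
    by have [j Hj] := HN i h; exists j.
  by exists 0.
have [c Hc] := choice_fun Hc0.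
pose phi := fix phi k := if k is k'.+1 then c (phi k') else N.
have phiN : forall k, (N <= phi k)%N.
  elim=> //= k IH; exact: leq_trans IH (ltnW (Hc _ IH).1).
exists phi; split.
  by move=> i /=; exact: (Hc _ (phiN i)).1.
move=> i j; elim: j => // j IH; rewrite ltnS leq_eqVlt => /orP [/eqP-> | ij].
  exact: (Hc _ (phiN j)).2.
exact: Rt (IH ij) (Hc _ (phiN j)).2.
Qed.

Lemma swqo_inter T (D : T -> Prop) (R1 R2 R3 : T -> T -> Prop) :
  swqo D R1 -> swqo D R2 -> (forall x y, R1 x y -> R2 x y -> R3 x y) -> swqo D R3.
Proof.
move=> S1 S2 H f Df; have [phi [phiI phiC]] := S1 f Df.
have [psi [psiI psiC]] := S2 (fun k => f (phi k)) (fun k => Df _).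
exists (fun k => phi (psi k)); split.
  by move=> i; exact: incr_mono phiI _ _ (psiI i).
move=> i j ij; apply: H; [exact: phiC (incr_mono psiI ij) | exact: psiC ij].
Qed.

Lemma swqo_list T (D : T -> Prop) (I : eqType) (Ri : I -> T -> T -> Prop) :
  (forall i x y z, Ri i x y -> Ri i y z -> Ri i x z) -> (forall i, wqo D (Ri i)) ->
  forall L : seq I, swqo D (fun x y => forall i, i \in L -> Ri i x y).
Proof.
move=> Ht W; elim=> [|a L IH].
  by move=> f Df; exists id; split => // i j _ k; rewrite in_nil.
apply: swqo_inter (weak_strong (Ht a) (W a)) IH _ => x y Ra RL i.
by rewrite in_cons => /orP [/eqP-> | iL]; [done | exact: RL].
Qed.

Lemma swqo_wqo T (D : T -> Prop) R : swqo D R -> wqo D R.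
Proof.
move=> S f Df; have [phi [pI pC]] := S f Df; exists (phi 0), (phi 1).
split; [exact: pI | exact: pC].
Qed.

Lemma wqo_refl T U (D : T -> Prop) (D' : U -> Prop) R R' (g : T -> U) :
  wqo D' R' -> (forall x, D x -> D' (g x)) ->
  (forall x y, D x -> R' (g x) (g y) -> R x y) -> wqo D R.
Proof.
move=> W Hd Hr f Df.
have [i [j [ij Rij]]] := W (fun k => g (f k)) (fun k => Hd _ (Df k)).
by exists i, j; split => //; exact: Hr (Df i) Rij.
Qed.

Lemma min_exists (h : nat -> nat) : exists i, forall j, (h i <= h j)%N.
Proof.
suff H : forall v i, (h i <= v)%N -> exists i', forall j, (h i' <= h j)%N.
  exact: H (h 0) 0 (leqnn _).
elim=> [|v IH] i hi.
  by exists i => j; move: hi; rewrite leqn0 => /eqP->.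
case: (classic (exists j, h j < h i)%N) => [[j hj]|nj].
  by apply: (IH j); rewrite -ltnS; exact: leq_trans hj hi.
exists i => j; rewrite leqNgt; apply/negP => hj; apply: nj; by exists j.
Qed.

Lemma wqo_coord k : wqo (fun _ : nat -> nat => True) (fun x y => (x k <= y k)%N).
Proof.
move=> f _; have [i Hi] := min_exists (fun m => f m k).
by exists i, i.+1; split => //; exact: Hi.
Qed.

Lemma dickson m : swqo (fun _ : nat -> nat => True)
  (fun x y => forall k, k \in iota 0 m -> (x k <= y k)%N).
Proof.
apply: (@swqo_list _ _ nat (fun k (x y : nat -> nat) => (x k <= y k)%N)).
  by move=> k x y z; exact: leq_trans.
exact: wqo_coord.
Qed.

Definition Ts (j : nat) (p : {poly nat}) : nat := (\sum_(j <= i < size p) (p`_i)%R)%N.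

Lemma Ts_geq j (p : {poly nat}) : (size p <= j)%N -> Ts j p = 0.
Proof. by move=> h; rewrite /Ts big_geq. Qed.

Lemma Ts_mono (p : {poly nat}) j j' : (j' <= j)%N -> (Ts j p <= Ts j' p)%N.
Proof.
move=> h; case: (leqP j (size p)) => hs.
  rewrite /Ts (big_cat_nat h hs) /=; exact: leq_addl.
by rewrite Ts_geq // ltnW.
Qed.

Lemma zero_tail (f : {poly nat}) a b : (size f <= a)%N ->
  (\sum_(a <= j < b) (f`_j)%R)%N = 0.
Proof.
move=> ha; rewrite big_nat_cond big1 // => j /andP[/andP[hj _] _].
by apply: nth_default; exact: leq_trans ha hj.
Qed.

Lemma tail_sumE (f : {poly nat}) K i : (size f <= K.+1)%N -> tail_sum f K i = Ts i f.
Proof.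
move=> hs; rewrite /tail_sum /Ts; case: (leqP i (size f)) => hi.
  by rewrite (big_cat_nat hi hs) /= (zero_tail _ (leqnn (size f))) addn0.
by rewrite [RHS]big_geq ?(ltnW hi) // (zero_tail _ (ltnW hi)).
Qed.

Lemma poly_leE (f g : {poly nat}) : (forall j, Ts j f <= Ts j g)%N -> poly_le f g.
Proof.
move=> H; rewrite /poly_le /= => i _; rewrite !tail_sumE //.
  exact: leq_trans (leq_maxr _ _) (leqnSn _).
exact: leq_trans (leq_maxl _ _) (leqnSn _).
Qed.

Definition Rp (p q : {poly nat}) := forall j, (Ts j p <= Ts j q)%N.

Definition gmap (R : nat) (p : {poly nat}) : nat -> nat := fun k =>
  if (k < R)%N then Ts k p
  else (\sum_(R <= j < size p) nat_of_bool (k - R < Ts j p))%N.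

Lemma count_lt R j N : (\sum_(R <= j' < N) nat_of_bool (j' < j) <= minn N j - R)%N.
Proof.
elim: N => [|N IH]; first by rewrite big_geq.
case: (leqP R N) => hRN.
  rewrite big_nat_recr //; case: (ltnP N j) => h /=; lia.
by rewrite big_geq.
Qed.

Lemma count_le R j N (b : nat -> bool) : (forall j', (j <= j')%N -> b j' = false) ->
  (\sum_(R <= j' < N) nat_of_bool (b j') <= j - R)%N.
Proof.
move=> Hb; apply: leq_trans (_ : \sum_(R <= j' < N) nat_of_bool (j' < j) <= _)%N.
  apply: leq_sum => i _; case: (ltnP i j) => h; first by case: (b i).
  by rewrite Hb.
apply: leq_trans (count_lt R j N) _; lia.
Qed.

Lemma count_ge R j N (b : nat -> bool) : (R <= j)%N -> (j < N)%N ->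
  (forall j', (R <= j' <= j)%N -> b j') ->
  (j.+1 - R <= \sum_(R <= j' < N) nat_of_bool (b j'))%N.
Proof.
move=> hR hN Hb.
rewrite (big_cat_nat (leqW hR) hN) /=; apply: leq_trans (leq_addr _ _).
rewrite (eq_big_nat _ _ (F2 := fun _ => 1%N)); last first.
  by move=> i /andP[h1 h2]; rewrite Hb // h1 -ltnS h2.
by rewrite sum_nat_const_nat muln1.
Qed.

Lemma gmap_refl R C (p q : {poly nat}) : (Ts R p < C)%N ->
  (forall k, k \in iota 0 (R + C) -> (gmap R p k <= gmap R q k)%N) -> Rp p q.
Proof.
move=> hpC H j; case: (ltnP j R) => hjR.
  have := H j; rewrite mem_iota /gmap hjR => -> //.
  by rewrite /= (leq_trans hjR) // leq_addr.
case Ev: (Ts j p) => [//|m].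
have hmC : (m < C)%N.
  by apply: leq_ltn_trans hpC; apply: leq_trans (leqnSn m) _; rewrite -Ev; exact: Ts_mono.
have Hk := H (R + m); rewrite mem_iota /= ltn_add2l hmC /gmap ltnNge leq_addr /= addKn in Hk.
have {}Hk := Hk isT.
have hjs : (j < size p)%N.
  by rewrite ltnNge; apply/negP => hs; move: Ev; rewrite Ts_geq.
have lo : (j.+1 - R <= \sum_(R <= j' < size p) nat_of_bool (m < Ts j' p))%N.
  apply: count_ge => // j' /andP[_ hj'].
  by apply: leq_trans (Ts_mono p hj'); rewrite Ev.
rewrite leqNgt; apply/negP => hq.
have hi : (\sum_(R <= j' < size q) nat_of_bool (m < Ts j' q) <= j - R)%N.
  apply: count_le => j' hj'; apply/negbTE; rewrite -leqNgt.
  by apply: leq_trans (Ts_mono q hj') _; rewrite -ltnS.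
have := leq_trans lo (leq_trans Hk hi); lia.
Qed.

Lemma wqo_part : wqo (fun _ : {poly nat} => True) Rp.
Proof.
move=> f _.
case: (classic (exists j, (0 < j)%N /\ Rp (f 0) (f j))) => [[j [hj Rj]]|nj].
  by exists 0, j.
set R := size (f 0); set C := Ts 0 (f 0).
have HE : forall k, (Ts R (f k.+1) < C)%N.
  move=> k; have : ~ Rp (f 0) (f k.+1) by move=> h; apply: nj; exists k.+1.
  rewrite /Rp => /not_all_ex_not [r hr].
  have hr' : (Ts r (f k.+1) < Ts r (f 0))%N by rewrite ltnNge; apply/negP.
  have hrR : (r < R)%N.
    by rewrite ltnNge; apply/negP => h; move: hr'; rewrite (Ts_geq h).
  exact: leq_ltn_trans (Ts_mono _ (ltnW hrR)) (leq_trans hr' (Ts_mono _ (leq0n r))).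
have WE : wqo (fun p => Ts R p < C)%N Rp.
  apply: (wqo_refl (swqo_wqo (dickson (R + C))) (g := gmap R)) => // x y hx.
  exact: gmap_refl hx.
have [i [j [ij Rij]]] := WE (fun k => f k.+1) HE.
by exists i.+1, j.+1.
Qed.

Definition Rv n (u v : {ffun 'I_n -> {poly nat}}) :=
  forall c, c \in enum 'I_n -> Rp (u c) (v c).

Lemma wqo_vec n : wqo (fun _ => True) (@Rv n).
Proof.
apply: swqo_wqo.
apply: (@swqo_list _ _ _ (fun c (u v : {ffun 'I_n -> {poly nat}}) => Rp (u c) (v c))).
  by move=> c x y z h1 h2 k; exact: leq_trans (h1 k) (h2 k).
by move=> c; apply: (@wqo_refl _ _ (fun _ => True) (fun _ => True) _ Rp (fun u : {ffun 'I_n -> {poly nat}} => u c) wqo_part).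
Qed.

Theorem lemma4p9 (n : nat) (S : {ffun 'I_n -> {poly nat}} -> Prop) :
  exists s : seq {ffun 'I_n -> {poly nat}},
    forall u, is_minimal S u -> u \in s.
Proof.
apply: NNPP => Hno.
have Hex : forall s : seq {ffun 'I_n -> {poly nat}}, exists u, is_minimal S u /\ u \notin s.
  move=> s; apply: NNPP => H1; apply: Hno; exists s => u mu; apply: NNPP => hu.
  by apply: H1; exists u; split => //; apply/negP.
have [pk Hpk] := choice_fun Hex.
pose hist := fix hist k := if k is k'.+1 then pk (hist k') :: hist k' else [::].
pose f k := pk (hist k).
have fin : forall i j, (i < j)%N -> f i \in hist j.
  move=> i; elim=> // j IH; rewrite ltnS leq_eqVlt => /orP [/eqP-> | h] /=;
    rewrite in_cons; first by rewrite eqxx.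
  by rewrite IH ?orbT.
have [i [j [ij Rij]]] := wqo_vec (f := f) (fun _ => I).
have [mi _] := Hpk (hist i); have [[Sj minj] nj] := Hpk (hist j).
have eq : f i = f j.
  apply: minj; first exact: mi.1.
  by move=> c; apply: poly_leE; apply: Rij; rewrite mem_enum.
by have := fin _ _ ij; rewrite eq; move/negP: nj.
Qed.
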